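(* Let $n\ge 1$, let $\rho>0$ and let $d_1,\dots,d_n>0$. Let $W=(w_{ij})$ be the $n\times n$ matrix with $w_{ij}=1/d_{\min(i,j)}$, let $\mathbf 1\in\mathbb R^n$ be the column vector of ones, and set $M=W-\frac{1}{\rho}\mathbf 1\mathbf 1^T$. If $d_1\le d_2\le\cdots\le d_n$ and $d_1>\rho$, then $M$ is negative semidefinite.
   Context: Interpretation: $d_i$ is the density of the cargo placed in the $i$-th position from the bottom of a vessel and $\rho$ is the water density; the hypothesis says every cargo lies above cargoes of lower (or equal) density and the lowest cargo is heavier than water. *)

(* Defs.v *)
From mathcomp Require Import all_boot all_order all_algebra.
Set Implicit Arguments. Unset Strict Implicit. Unset Printing Implicit Defensive.
Import Order.TTheory GRing.Theory Num.Theory.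
Local Open Scope ring_scope.

Definition neg_semidef (R : realFieldType) (n : nat) (M : 'M[R]_n) : Prop :=
  forall x : 'cV[R]_n, (x^T *m M *m x) 0 0 <= 0.

Definition Wmx (R : realFieldType) (n : nat) (d : 'I_n -> R) : 'M[R]_n :=
  \matrix_(i, j) (d (if (i <= j)%N then i else j))^-1.

Definition ones (R : realFieldType) (n : nat) : 'cV[R]_n := const_mx 1.

(* Main.v *)
Require Import Defs.
From mathcomp Require Import all_boot all_order all_algebra.
From mathcomp Require Import ring lra zify.
Import Order.TTheory GRing.Theory Num.Theory.
Local Open Scope ring_scope.
Lemma coreQ (R : realFieldType) (n : nat) (x e : nat -> R)
  (he : forall i, (i.+1 < n)%N -> e i.+1 <= e i) :
  forall m k, (k + m = n)%N ->
  \sum_(k <= i < n) \sum_(k <= j < n) x i * x j * e (minn i j)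
   <= e k * (\sum_(k <= i < n) x i) ^+ 2.
Proof.
elim=> [|m IH] k hk.
  rewrite addn0 in hk; subst k; rewrite !big_geq //; lra.
have hkn : (k < n)%N by rewrite -hk addnS ltnS leq_addr.
have := IH k.+1 (etrans (addSnnS k m) hk).
set Q := \sum_(k.+1 <= i < n) \sum_(k.+1 <= j < n) x i * x j * e (minn i j).
set S := \sum_(k.+1 <= i < n) x i.
move=> HQ.
have E1 : \sum_(k <= i < n) x i = x k + S by rewrite big_ltn.
have E2 : \sum_(k <= i < n) \sum_(k <= j < n) x i * x j * e (minn i j)
   = x k * x k * e k + 2 * (x k * e k * S) + Q.
  have A1 : \sum_(k.+1 <= j < n) x k * x j * e (minn k j) = x k * e k * S.
    rewrite /S mulr_sumr; apply: eq_big_nat => j /andP [hj _].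
    rewrite (minn_idPl (ltnW hj)); ring.
  have A2 : \sum_(k.+1 <= i < n) \sum_(k <= j < n) x i * x j * e (minn i j)
      = x k * e k * S + Q.
    rewrite /Q /S mulr_sumr -big_split /=; apply: eq_big_nat => i /andP [hi _].
    rewrite big_ltn // (minn_idPr (ltnW hi)); congr (_ + _); ring.
  rewrite big_ltn // A2 big_ltn // minnn A1.
  ring.
rewrite E1 E2.
have : e k.+1 * S ^+ 2 <= e k * S ^+ 2.
  case: (ltnP k.+1 n) => hk1.
    by apply: ler_wpM2r; [apply: sqr_ge0| apply: he].
  by rewrite /S big_geq // expr0n /= !mulr0.
nra.
Qed.

Lemma qformE (R : realFieldType) (n : nat) (A : 'M[R]_n) (x : 'cV[R]_n) :
  (x^T *m A *m x) 0 0 = \sum_j \sum_i x i 0 * A i j * x j 0.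
Proof.
rewrite mxE; apply: eq_bigr => j _; rewrite mxE mulr_suml.
by apply: eq_bigr => i _; rewrite mxE.
Qed.

Theorem mainTheorem4 (R : realFieldType) (n : nat) (hn : (0 < n)%N)
  (rho : R) (d : 'I_n -> R)
  (hrho : 0 < rho) (hd : forall i, 0 < d i)
  (hmono : forall i j : 'I_n, (i <= j)%N -> d i <= d j)
  (hd1 : rho < d (Ordinal hn)) :
  neg_semidef (Wmx d - rho^-1 *: (ones R n *m (ones R n)^T)).
Proof.
move=> x; rewrite qformE.
under eq_bigr => j _ do under eq_bigr => i _ do rewrite !mxE big_ord1 !mxE mulr1.
case: n hn d hd hmono hd1 x => [//|n] hn d hd hmono hd1 x.
pose y (i : nat) : R := x (inord i) 0.
pose e (i : nat) := (d (inord i))^-1.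
have -> : \sum_(j < n.+1) \sum_(i < n.+1)
    x i 0 * ((d (if (i <= j)%N then i else j))^-1 - rho^-1 * 1) * x j 0
  = \sum_(j < n.+1) \sum_(i < n.+1)
      (y j * y i * e (minn j i) - rho^-1 * (y j * y i)).
  apply: eq_bigr => j _; apply: eq_bigr => i _.
  rewrite /y /e !inord_val.
  have -> : (if (i <= j)%N then i else j) = inord (minn j i).
    apply: val_inj; rewrite /= inordK; last by rewrite gtn_min ltn_ord.
    by case: (leqP i j) => h /=; lia.
  ring.
rewrite -(big_mkord xpredT (fun j => \sum_(i < n.+1)
      (y j * y i * e (minn j i) - rho^-1 * (y j * y i)))).
under eq_bigr => j _ do rewrite -(big_mkord xpredT (fun i =>
      (y j * y i * e (minn j i) - rho^-1 * (y j * y i)))) sumrB.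
rewrite sumrB.
have HS : \sum_(0 <= j < n.+1) \sum_(0 <= i < n.+1) rho^-1 * (y j * y i)
    = rho^-1 * (\sum_(0 <= i < n.+1) y i) ^+ 2.
  rewrite expr2 mulr_suml mulr_sumr; apply: eq_bigr => j _.
  rewrite mulr_sumr mulr_sumr; apply: eq_bigr => i _; ring.
rewrite HS.
have he : forall i, (i.+1 < n.+1)%N -> e i.+1 <= e i.
  move=> i hi; rewrite /e lef_pV2 ?posrE ?hd //.
  by apply: hmono; rewrite !inordK // ltnW.
have HQ := @coreQ R n.+1 y e he n.+1 0 (add0n _).
have He0 : e 0%N <= rho^-1.
  rewrite /e lef_pV2 ?posrE ?hd //; apply: ltW.
  by have -> : inord 0 = Ordinal hn by apply: val_inj; rewrite /= inordK.
have Hsq := sqr_ge0 (\sum_(0 <= i < n.+1) y i).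
set S := \sum_(0 <= i < n.+1) y i in HQ HS Hsq *.
nra.
Qed.
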